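(* Let $\|\cdot\|$ be a norm on $\mathbb{C}^n$. There exists a sequence, indexed by positive integers $d$, of functions \[F_{2d}(z):=\sum_{i=1}^{N(2d)} w_i |\langle z,y_i\rangle|^{2d},\] with $N(2d)\in\mathbb{N}$, points $y_i\in\mathbb{C}^n$ and real positive weights $w_i$, such that: (1) $n_{2d}(z):=F_{2d}(z)^{1/(2d)}$ is a norm on $\mathbb{C}^n$; (2) $n_{2d}(z)\leq\|z\|$ for all $z\in\mathbb{C}^n$; (3) $n_{2d}(z)$ converges to $\|z\|$ as $d\to\infty$, uniformly on compact subsets of $\mathbb{C}^n$.
   Context: A norm on $\mathbb{C}^n$ is a complex norm, i.e. it satisfies $\|\lambda z\|=|\lambda|\|z\|$ for all complex $\lambda$. $\langle z,y\rangle$ denotes the standard Hermitian inner product on $\mathbb{C}^n$. *)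

(* Defs.v *)
From HB Require Import structures.
From mathcomp Require Import all_boot all_order all_algebra.
From mathcomp Require Import all_classical all_reals all_analysis.
From mathcomp Require Import complex.
Import Order.TTheory GRing.Theory Num.Theory numFieldTopology.Exports numFieldNormedType.Exports.
Local Open Scope ring_scope.

(* Equip C = R[i] with MathComp-Analysis's standard topology of a numFieldType
   (the metric topology of the complex modulus); 'rV[R[i]]_n then carries the
   product topology, i.e. the usual Euclidean topology of C^n. *)
HB.instance Definition _ (R : realType) := PseudoPointedMetric.copy R[i] R[i]^o.

Set Implicit Arguments. Unset Strict Implicit. Unset Printing Implicit Defensive.

Definition cmod (R : realType) (z : R[i]) : R := Normc.normc z.

Definition hinner (R : realType) (n : nat) (z y : 'rV[R[i]]_n) : R[i] :=
  \sum_(k < n) z ord0 k * (y ord0 k)^*%C.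

Definition is_cnorm (R : realType) (n : nat) (nu : 'rV[R[i]]_n -> R) : Prop :=
  [/\ (forall z, 0 <= nu z),
      (forall z, nu z = 0 -> z = 0),
      (forall (l : R[i]) z, nu (l *: z) = cmod l * nu z) &
      (forall z y, nu (z + y) <= nu z + nu y)].

Definition Fsum (R : realType) (n N : nat) (w : 'I_N -> R)
  (y : 'I_N -> 'rV[R[i]]_n) (d : nat) (z : 'rV[R[i]]_n) : R :=
  \sum_(i < N) w i * cmod (hinner z (y i)) ^+ (2 * d).

Definition nroot (R : realType) (n N : nat) (w : 'I_N -> R)
  (y : 'I_N -> 'rV[R[i]]_n) (d : nat) (z : 'rV[R[i]]_n) : R :=
  powR (Fsum w y d z) ((2 * d)%:R)^-1.

(* Main.v *)
Require Import Defs.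
From mathcomp Require Import all_boot all_order all_algebra.
From mathcomp Require Import all_classical all_reals all_analysis.
From mathcomp Require Import complex.
Import Order.TTheory GRing.Theory Num.Theory numFieldTopology.Exports numFieldNormedType.Exports.
Local Open Scope ring_scope.
From mathcomp Require Import ring lra zify.

Module Helpers.
Local Open Scope classical_set_scope.
Local Open Scope complex_scope.
Section Cmod.
Context {R : realType}.
Implicit Types x y z : R[i].

Lemma cmodE z : cmod z = Num.sqrt (complex.Re z ^+ 2 + complex.Im z ^+ 2).
Proof. by case: z. Qed.

Lemma cmod_ge0 z : 0 <= cmod z.
Proof. by rewrite cmodE sqrtr_ge0. Qed.

Lemma cmod0 : cmod (0 : R[i]) = 0.
Proof. exact: Normc.normc0. Qed.

Lemma cmod_eq0 z : cmod z = 0 -> z = 0.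
Proof. exact: Normc.eq0_normc. Qed.

Lemma cmodM x y : cmod (x * y) = cmod x * cmod y.
Proof. exact: Normc.normcM. Qed.

Lemma cmodD x y : cmod (x + y) <= cmod x + cmod y.
Proof. exact: le_normcD. Qed.

Lemma cmodN x : cmod (- x) = cmod x.
Proof. exact: normcN. Qed.

Lemma cmodJ x : cmod (x^*) = cmod x.
Proof. by case: x => a b; rewrite /cmod /= sqrrN. Qed.

Lemma cmodR (k : R) : cmod (k%:C) = `|k|.
Proof. by rewrite cmodE /= expr0n addr0 sqrtr_sqr. Qed.

Lemma cmod_sqr z : cmod z ^+ 2 = complex.Re z ^+ 2 + complex.Im z ^+ 2.
Proof. by rewrite cmodE sqr_sqrtr // addr_ge0 // sqr_ge0. Qed.

Lemma Re_le_cmod z : complex.Re z <= cmod z.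
Proof.
apply: (le_trans (ler_norm _)); rewrite -[leRHS]ger0_norm ?cmod_ge0 //.
by rewrite -ler_sqr ?nnegrE ?normr_ge0 // !real_normK ?num_real // cmod_sqr lerDl sqr_ge0.
Qed.

Lemma mulcJ z : z * z^* = (cmod z ^+ 2)%:C.
Proof.
case: z => a b; rewrite cmod_sqr /=; apply/eqP; rewrite eq_complex /=; apply/andP; split; apply/eqP.
  by rewrite mulrN opprK !expr2.
by rewrite mulrN mulrC addNr.
Qed.

Lemma cmod1 : cmod (1 : R[i]) = 1.
Proof. exact: Normc.normc1. Qed.

Lemma cmodV x : cmod (x^-1) = (cmod x)^-1.
Proof. exact: Normc.normcV. Qed.

Lemma cmodB x y : cmod (x - y) = cmod (y - x).
Proof. by rewrite -cmodN opprB. Qed.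

Lemma cmodDl x y : cmod x - cmod y <= cmod (x - y).
Proof. by rewrite lerBlDr (le_trans _ (cmodD _ _)) // subrK. Qed.

Lemma cmod_lip x y : `|cmod x - cmod y| <= cmod (x - y).
Proof.
rewrite ler_norml cmodDl andbT lerNl opprB cmodB; exact: cmodDl.
Qed.

Lemma ReD x y : complex.Re (x + y) = complex.Re x + complex.Re y. Proof. by case: x; case: y. Qed.
Lemma ReRM (k : R) x : complex.Re (k%:C * x) = k * complex.Re x.
Proof. by case: x => a b /=; rewrite mul0r subr0. Qed.
Lemma ReR (k : R) : complex.Re (k%:C) = k. Proof. by []. Qed.
Lemma ReJ x : complex.Re (x^*) = complex.Re x. Proof. by case: x. Qed.

End Cmod.
Section Inner.
Context {R : realType} {n : nat}.
Implicit Types x y : 'rV[R[i]]_n.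

Definition l1 x : R := \sum_(k < n) cmod (x ord0 k).

Lemma hinnerD x x' y : hinner (x + x') y = hinner x y + hinner x' y.
Proof. by rewrite /hinner -big_split; apply: eq_bigr => k _; rewrite mxE mulrDl. Qed.

Lemma hinnerZ l x y : hinner (l *: x) y = l * hinner x y.
Proof. by rewrite /hinner mulr_sumr; apply: eq_bigr => k _; rewrite mxE mulrA. Qed.

Lemma hinnerN x y : hinner (- x) y = - hinner x y.
Proof. by rewrite /hinner -sumrN; apply: eq_bigr => k _; rewrite mxE mulNr. Qed.

Lemma hinnerB x x' y : hinner (x - x') y = hinner x y - hinner x' y.
Proof. by rewrite hinnerD hinnerN. Qed.

Lemma hinner0 y : hinner 0 y = 0.
Proof. by rewrite /hinner big1 // => k _; rewrite mxE mul0r. Qed.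

Lemma hinnerZr c x y : hinner x (c *: y) = c^* * hinner x y.
Proof.
rewrite /hinner mulr_sumr; apply: eq_bigr => k _; rewrite mxE rmorphM /=.
by rewrite mulrCA.
Qed.

Lemma hinner_bound x y :
  cmod (hinner x y) <= \sum_(k < n) cmod (x ord0 k) * cmod (y ord0 k).
Proof.
rewrite /hinner; elim/big_ind2: _ => [|a b c d Ha Hb|k _].
- by rewrite cmod0.
- by apply: (le_trans (cmodD _ _)); apply: lerD.
- by rewrite cmodM cmodJ.
Qed.

Lemma hinner_self x : hinner x x = (\sum_(k < n) cmod (x ord0 k) ^+ 2)%:C.
Proof.
rewrite /hinner rmorph_sum; apply: eq_bigr => k _; exact: mulcJ.
Qed.

Lemma l1_ge0 x : 0 <= l1 x.
Proof. by apply: sumr_ge0 => k _; exact: cmod_ge0. Qed.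

Lemma l1_eq0 x : l1 x = 0 -> x = 0.
Proof.
move/eqP; rewrite psumr_eq0; last by move=> k _; exact: cmod_ge0.
move=> /allP H; apply/rowP => k; rewrite mxE; apply: cmod_eq0.
by apply/eqP; apply: H; rewrite mem_index_enum.
Qed.

Lemma l1Z l x : l1 (l *: x) = cmod l * l1 x.
Proof. by rewrite /l1 mulr_sumr; apply: eq_bigr => k _; rewrite mxE cmodM. Qed.

Lemma l1D x y : l1 (x + y) <= l1 x + l1 y.
Proof. rewrite /l1 -big_split /=; apply: ler_sum => k _; rewrite mxE; exact: cmodD. Qed.

Lemma l1_coord x k : cmod (x ord0 k) <= l1 x.
Proof.
rewrite /l1 (bigD1 k) //= lerDl; apply: sumr_ge0 => j _; exact: cmod_ge0.
Qed.

Lemma hinner_lip x y : cmod (hinner x y) <= l1 y * l1 x.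
Proof.
apply: (le_trans (hinner_bound x y)); rewrite /l1 mulr_sumr.
apply: ler_sum => k _; rewrite mulrC ler_wpM2r ?cmod_ge0 //; exact: l1_coord.
Qed.

End Inner.

Section Nrm.
Context {R : realType} {n : nat}. Variable (nrm : 'rV[R[i]]_n -> R).
Hypothesis Hn : is_cnorm nrm.
Implicit Types x y : 'rV[R[i]]_n.

Lemma nrm_ge0 x : 0 <= nrm x. Proof. by case: Hn. Qed.
Lemma nrm_eq0 x : nrm x = 0 -> x = 0. Proof. by case: Hn => _ H _ _; exact: H. Qed.
Lemma nrmZ l x : nrm (l *: x) = cmod l * nrm x. Proof. by case: Hn. Qed.
Lemma nrmD x y : nrm (x + y) <= nrm x + nrm y. Proof. by case: Hn. Qed.
Lemma nrm0 : nrm 0 = 0.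
Proof. by rewrite -(scale0r (0 : 'rV[R[i]]_n)) nrmZ cmod0 mul0r. Qed.
Lemma nrmN x : nrm (- x) = nrm x.
Proof. by rewrite -scaleN1r nrmZ cmodN cmod1 mul1r. Qed.
Lemma nrmB x y : nrm (x - y) = nrm (y - x).
Proof. by rewrite -nrmN opprB. Qed.
Lemma nrm_lip x y : `|nrm x - nrm y| <= nrm (x - y).
Proof.
have H a b : nrm a - nrm b <= nrm (a - b).
  by rewrite lerBlDr (le_trans _ (nrmD _ _)) // subrK.
by rewrite ler_norml H andbT lerNl opprB nrmB H.
Qed.

Definition Mn : R := \sum_(k < n) nrm (delta_mx ord0 k).

Lemma nrm_sum (I : Type) (r : seq I) (F : I -> 'rV[R[i]]_n) :
  nrm (\sum_(i <- r) F i) <= \sum_(i <- r) nrm (F i).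
Proof.
elim/big_ind2: _ => [|a b c d Ha Hb|i _ ]; first by rewrite nrm0.
  by apply: (le_trans (nrmD _ _)); apply: lerD.
done.
Qed.

Lemma row_decomp x : x = \sum_(k < n) x ord0 k *: delta_mx ord0 k.
Proof.
apply/rowP => j; rewrite summxE (bigD1 j) //= big1 ?addr0.
  by rewrite !mxE !eqxx mulr1.
by move=> k kj; rewrite !mxE [j == k]eq_sym (negbTE kj) andbF mulr0.
Qed.

Lemma nrm_le_l1 x : nrm x <= Mn * l1 x.
Proof.
rewrite {1}(row_decomp x); apply: (le_trans (nrm_sum _ _ _)).
rewrite /l1 mulr_sumr; apply: ler_sum => k _; rewrite nrmZ mulrC ler_wpM2r ?cmod_ge0 //.
rewrite /Mn (bigD1 k) //= lerDl; apply: sumr_ge0 => j _; exact: nrm_ge0.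
Qed.

Lemma nrm_cont_bound x y : `|nrm x - nrm y| <= Mn * l1 (x - y).
Proof. exact: le_trans (nrm_lip x y) (nrm_le_l1 _). Qed.

Lemma Mn_ge0 : 0 <= Mn.
Proof. by apply: sumr_ge0 => j _; exact: nrm_ge0. Qed.
End Nrm.

Lemma normC_cmod {R : realType} (z : R[i]) : `|z| = (cmod z)%:C.
Proof. by rewrite normc_def cmodE. Qed.

Lemma ballC {R : realType} (z w : R[i]) (r : R) : ball z r%:C w <-> cmod (z - w) < r.
Proof. by rewrite /ball /= normC_cmod ltcR. Qed.

Lemma nbhs_rV {R : realType} {n : nat} (x0 : 'rV[R[i]]_n) (A : set 'rV[R[i]]_n) (r : R) :
  0 < r -> (forall x : 'rV[R[i]]_n, (forall k, cmod (x0 ord0 k - x ord0 k) < r) -> A x) -> nbhs x0 A.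
Proof.
move=> r0 HA; apply/nbhs_ballP; exists r%:C; first by rewrite /= ltcR.
move=> x [_ Hx]; apply: HA => k; apply/ballC; exact: Hx.
Qed.

Lemma cont_rV {R : realType} {n : nat} (f : 'rV[R[i]]_n -> R) x0 (C : R) : 0 <= C ->
  (forall x, l1 (x - x0) <= 1 -> `|f x - f x0| <= C * l1 (x - x0)) ->
  {for x0, continuous f}.
Proof.
move=> C0 Hf P /nbhs_ballP [e /= e0 HP].
pose rho := Num.min 1 (e / (C + 1)).
have rho0 : 0 < rho by rewrite lt_min ltr01 divr_gt0 // ltr_wpDl.
have rho1 : rho <= 1 by rewrite ge_min lexx.
have rhoe : rho <= e / (C + 1) by rewrite ge_min lexx orbT.
apply: (@nbhs_rV _ _ _ _ (rho / (n.+1)%:R)); first by rewrite divr_gt0.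
move=> x Hx; apply: HP.
have Hl : l1 (x - x0) <= rho.
  apply: (@le_trans _ _ (\sum_(k < n) (rho / (n.+1)%:R))).
    apply: ler_sum => k _; rewrite !mxE cmodB; exact: ltW (Hx k).
  rewrite sumr_const card_ord -[_ *+ n]mulr_natr -mulrA; apply: ler_piMr; first exact: ltW.
  by rewrite mulrC ler_pdivrMr ?ltr0n // mul1r ler_nat.
have := Hf x (le_trans Hl rho1).
rewrite /ball /= distrC => H; apply: (le_lt_trans H).
apply: (@le_lt_trans _ _ (C * rho)); first by rewrite ler_wpM2l.
apply: (@le_lt_trans _ _ (C * (e / (C + 1)))); first by rewrite ler_wpM2l.
by rewrite mulrA ltr_pdivrMr ?ltr_wpDl // mulrC ltr_pM2l // ltrDl.
Qed.

Lemma cmod_Complex {R : realType} (a b : R) : cmod (a +i* b) <= `|a| + `|b|.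
Proof.
have -> : a +i* b = a%:C + (0 +i* b) by apply/eqP; rewrite eq_complex /= addr0 add0r !eqxx.
apply: (le_trans (cmodD _ _)); rewrite cmodR lerD2l cmodE /= expr0n add0r sqrtr_sqr //.
Qed.

Lemma cont_mkC {R : realType} : continuous (fun p : R * R => (p.1 +i* p.2) : R[i]).
Proof.
move=> [a b] P /nbhs_ballP [e e0 HP].
have [Ie Re0] : complex.Im e = 0 /\ 0 < complex.Re e.
  by move: e0 => /=; rewrite ltcE /= => /andP[/eqP <- ->].
set r := complex.Re e.
have er : e = r%:C by rewrite /r; move: Ie; case: (e) => x y /= ->.
exists (ball a (r / 2), ball b (r / 2)); first by split; apply: nbhsx_ballx; rewrite divr_gt0.
case=> a' b' [/= Ha Hb]; apply: HP; rewrite er; apply/ballC.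
have -> : (a +i* b) - (a' +i* b') = (a - a') +i* (b - b') by [].
apply: (le_lt_trans (cmod_Complex _ _)).
move: Ha Hb; rewrite /ball /= => Ha Hb.
by rewrite [r in _ < r](splitr r) ltrD.
Qed.

Lemma abs_Re_le {R : realType} (z : R[i]) : `|complex.Re z| <= cmod z.
Proof.
rewrite -ler_sqr ?nnegrE ?normr_ge0 ?cmod_ge0 // real_normK ?num_real // cmod_sqr lerDl sqr_ge0 //.
Qed.

Lemma abs_Im_le {R : realType} (z : R[i]) : `|complex.Im z| <= cmod z.
Proof.
rewrite -ler_sqr ?nnegrE ?normr_ge0 ?cmod_ge0 // real_normK ?num_real // cmod_sqr lerDr sqr_ge0 //.
Qed.

Definition Sq {R : realType} (r : R) : set R[i] :=
  [set (p.1 +i* p.2) | p in (`[- r, r]%classic `*` `[- r, r]%classic)].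

Lemma Sq_compact {R : realType} (r : R) : compact (Sq r).
Proof.
apply: continuous_compact; first exact: continuous_subspaceT (@cont_mkC R).
apply: compact_setX; exact: segment_compact.
Qed.

Lemma l1N {R : realType} {n : nat} (x : 'rV[R[i]]_n) : l1 (- x) = l1 x.
Proof. by rewrite -scaleN1r l1Z cmodN cmod1 mul1r. Qed.

Lemma l1_lip {R : realType} {n : nat} (x y : 'rV[R[i]]_n) : `|l1 x - l1 y| <= l1 (x - y).
Proof.
have H (a b : 'rV[R[i]]_n) : l1 a - l1 b <= l1 (a - b).
  by rewrite lerBlDr (le_trans _ (l1D _ _)) // subrK.
have := H y x; rewrite -[l1 (y - x)]l1N opprB => H2; rewrite ler_norml H andbT; lra.
Qed.

Lemma l1_cont {R : realType} {n : nat} : continuous (@l1 R n).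
Proof.
move=> x0; apply: (@cont_rV _ _ _ _ 1) => // x _; rewrite mul1r; exact: l1_lip.
Qed.

Lemma closed_fle {R : realType} {n : nat} (f : 'rV[R[i]]_n -> R) (r : R) :
  continuous f -> closed [set x | f x <= r].
Proof.
move=> cf; apply: (@preimage_closed _ _ f [set t | t <= r]); last exact: closed_le.
by move=> x _; apply: cf.
Qed.

Lemma closed_fge {R : realType} {n : nat} (f : 'rV[R[i]]_n -> R) (r : R) :
  continuous f -> closed [set x | r <= f x].
Proof.
move=> cf; apply: (@preimage_closed _ _ f [set t | r <= t]); last exact: closed_ge.
by move=> x _; apply: cf.
Qed.

Lemma ball1_compact {R : realType} {n : nat} (r : R) :
  compact [set x : 'rV[R[i]]_n | l1 x <= r].
Proof.
apply: (@subclosed_compact _ _ [set x : 'rV[R[i]]_n | forall k, Sq r (x ord0 k)]).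
- exact: closed_fle l1_cont.
- exact: (@rV_compact _ n (fun=> Sq r) (fun=> Sq_compact r)).
move=> x /= Hx k; exists (complex.Re (x ord0 k), complex.Im (x ord0 k)).
  split; rewrite /= in_itv /= -ler_norml.
    exact: le_trans (abs_Re_le _) (le_trans (l1_coord _ _) Hx).
  exact: le_trans (abs_Im_le _) (le_trans (l1_coord _ _) Hx).
by case: (x ord0 k).
Qed.

Section Euclid.
Context {R : realType} {n : nat}.
Implicit Types x y u v : 'rV[R[i]]_n.

Definition l2sq x : R := \sum_(k < n) cmod (x ord0 k) ^+ 2.

Definition rin x y : R := \sum_(k < n)
  (complex.Re (x ord0 k) * complex.Re (y ord0 k) + complex.Im (x ord0 k) * complex.Im (y ord0 k)).

Lemma Re_hinner x y : complex.Re (hinner x y) = rin x y.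
Proof.
rewrite /hinner /rin (big_morph (@complex.Re R) (@ReD R) (erefl (0:R) : complex.Re (0:R[i]) = 0)).
by apply: eq_bigr => k _; case: (x ord0 k) => a b; case: (y ord0 k) => c d /=; ring.
Qed.

Lemma l2sq_ge0 x : 0 <= l2sq x.
Proof. by apply: sumr_ge0 => k _; exact: sqr_ge0. Qed.

Lemma l2sq_eq0 x : l2sq x = 0 -> x = 0.
Proof.
move/eqP; rewrite psumr_eq0; last by move=> k _; exact: sqr_ge0.
move=> /allP H; apply/rowP => k; rewrite mxE; apply: cmod_eq0.
by apply/eqP; rewrite -sqrf_eq0; apply: H; rewrite mem_index_enum.
Qed.

Lemma rin_self x : rin x x = l2sq x.
Proof. by apply: eq_bigr => k _; rewrite cmod_sqr !expr2. Qed.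

Lemma l2sq_expand u v (s : R) :
  l2sq (u - s%:C *: v) = l2sq u - 2 * s * rin v u + s ^+ 2 * l2sq v.
Proof.
rewrite /l2sq /rin mulr_sumr mulr_sumr -sumrB -big_split /=.
apply: eq_bigr => k _; rewrite !mxE !cmod_sqr.
by case: (u ord0 k) => a b; case: (v ord0 k) => c d /=; ring.
Qed.

Lemma rinD x x' y : rin (x + x') y = rin x y + rin x' y.
Proof.
rewrite /rin -big_split; apply: eq_bigr => k _; rewrite !mxE.
by case: (x ord0 k) => a b; case: (x' ord0 k) => c d /=; ring.
Qed.

Lemma rinN x y : rin (- x) y = - rin x y.
Proof.
rewrite /rin -sumrN; apply: eq_bigr => k _; rewrite !mxE.
by case: (x ord0 k) => a b /=; ring.
Qed.

Lemma rinZ (s : R) x y : rin (s%:C *: x) y = s * rin x y.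
Proof.
rewrite /rin mulr_sumr; apply: eq_bigr => k _; rewrite !mxE.
by case: (x ord0 k) => a b /=; ring.
Qed.

Lemma rinZr (s : R) x y : rin x (s%:C *: y) = s * rin x y.
Proof.
rewrite /rin mulr_sumr; apply: eq_bigr => k _; rewrite !mxE.
by case: (y ord0 k) => a b /=; ring.
Qed.

Lemma l2sq_lip u u0 : l1 (u - u0) <= 1 ->
  `|l2sq u - l2sq u0| <= (2 * l1 u0 + 1) * l1 (u - u0).
Proof.
move=> H1; rewrite /l2sq -sumrB [l1 (u - u0)]/l1 mulr_sumr.
apply: (le_trans (ler_norm_sum _ _ _)); apply: ler_sum => k _.
set a := cmod (u ord0 k); set b := cmod (u0 ord0 k); set c := cmod ((u - u0) ord0 k).
have a0 : 0 <= a by exact: cmod_ge0.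
have b0 : 0 <= b by exact: cmod_ge0.
have c0 : 0 <= c by exact: cmod_ge0.
have hab : `|a - b| <= c by rewrite /c !mxE; exact: cmod_lip.
have c1 : c <= 1 by exact: le_trans (l1_coord _ _) H1.
have bl : b <= l1 u0 by exact: l1_coord.
move: hab; rewrite !ler_norml => /andP[h1 h2].
have e1 : 0 <= (c - (a - b)) * (a + b) by apply: mulr_ge0; lra.
have e2 : 0 <= (c + (a - b)) * (a + b) by apply: mulr_ge0; lra.
have e3 : 0 <= c * ((2 * b + 1) - (a + b)) by apply: mulr_ge0; lra.
have e4 : 0 <= c * (l1 u0 - b) by apply: mulr_ge0; lra.
rewrite !expr2; apply/andP; split; nra.
Qed.

Lemma l2sq_cont p : continuous (fun b : 'rV[R[i]]_n => l2sq (p - b)).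
Proof.
move=> b0; apply: (@cont_rV _ _ _ _ (2 * l1 (p - b0) + 1)).
  by apply: addr_ge0 => //; apply: mulr_ge0 => //; exact: l1_ge0.
have e x : (p - x) - (p - b0) = - (x - b0) by rewrite opprB addrC addrA subrK opprB.
move=> x Hx; rewrite -(l1N (x - b0)) -e; apply: l2sq_lip.
by rewrite e l1N.
Qed.

End Euclid.

Lemma var_ineq {R : realType} (t L : R) : 0 <= L ->
  (forall s, 0 < s -> s <= 1 -> 2 * s * t <= s ^+ 2 * L) -> t <= 0.
Proof.
move=> L0 H; rewrite leNgt; apply/negP => t0.
pose s := Num.min 1 (t / (L + 1)).
have s0 : 0 < s by rewrite lt_min ltr01 divr_gt0 // ltr_wpDl.
have s1 : s <= 1 by rewrite ge_min lexx.
have s2 : s * (L + 1) <= t.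
  rewrite -ler_pdivlMr ?ltr_wpDl //; by rewrite ge_min lexx orbT.
have := H s s0 s1; rewrite expr2 => h.
have h' : 2 * t <= s * L by nra.
nra.
Qed.

Lemma rin0 {R : realType} {n : nat} (y : 'rV[R[i]]_n) : rin 0 y = 0.
Proof. by rewrite /rin big1 // => k _; rewrite mxE /= !mul0r addr0. Qed.

Section Dual.
Context {R : realType} {n : nat}.
Variable (nrm : 'rV[R[i]]_n -> R).
Hypothesis Hn : is_cnorm nrm.
Implicit Types x y z u v b w : 'rV[R[i]]_n.

Lemma nrm_cont : continuous nrm.
Proof.
move=> x0; apply: (@cont_rV _ _ _ _ (Mn nrm)); first exact: Mn_ge0.
move=> x _; exact: nrm_cont_bound.
Qed.

Lemma l2sq_coord w k : cmod (w ord0 k) ^+ 2 <= l2sq w.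
Proof. by rewrite /l2sq (bigD1 k) //= lerDl; apply: sumr_ge0 => j _; exact: sqr_ge0. Qed.

Lemma l1_le_l2sq w : l1 w <= n%:R * (1 + l2sq w).
Proof.
apply: (@le_trans _ _ (\sum_(k < n) (1 + l2sq w))); last by rewrite sumr_const card_ord mulr_natl.
rewrite /l1; apply: ler_sum => k _.
have h := l2sq_coord w k; have h0 := cmod_ge0 (w ord0 k).
set a := cmod (w ord0 k) in h h0 *; rewrite expr2 in h; nra.
Qed.

Lemma dual_approx z t : nrm z = 1 -> 0 < t ->
  exists y, (forall x, cmod (hinner x y) <= nrm x) /\ (1 + t)^-1 < cmod (hinner z y).
Proof.
move=> nz t0.
pose p := (1 + t)%:C *: z.
have np : nrm p = 1 + t by rewrite /p (nrmZ _ Hn) cmodR nz mulr1 ger0_norm // addr_ge0 // ltW.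
pose C := [set b | nrm b <= 1] `&` [set b | l2sq (p - b) <= l2sq p].
have Ccomp : compact C.
  apply: (@subclosed_compact _ _ [set x | l1 x <= l1 p + n%:R * (1 + l2sq p)]).
  - apply: closedI; [exact: closed_fle nrm_cont | exact: closed_fle (l2sq_cont p)].
  - exact: ball1_compact.
  move=> b [/= _ hb]; have -> : b = p - (p - b) by rewrite opprB addrC subrK.
  apply: (le_trans (l1D _ _)); rewrite l1N lerD2l.
  apply: (le_trans (l1_le_l2sq _)); rewrite ler_wpM2l // lerD2l //.
have C0 : C !=set0 by exists 0; split; rewrite /= ?(nrm0 _ Hn) ?subr0 //.
have [q qC qmin] := compact_EVT_min C0 Ccomp (continuous_subspaceT (l2sq_cont p)).
move: qC; rewrite inE => -[/= qB qE].
have qmin' b : nrm b <= 1 -> l2sq (p - q) <= l2sq (p - b).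
  move=> hb; case: (leP (l2sq (p - b)) (l2sq p)) => h.
    by apply: qmin; rewrite inE.
  by apply: (le_trans qE); exact: ltW.
pose u := p - q.
have key b : nrm b <= 1 -> rin b u <= rin q u.
  move=> hb; rewrite -subr_le0 -rinN -rinD.
  apply: (@var_ineq _ _ (l2sq (b - q)) (l2sq_ge0 _)) => s s0 s1.
  have hbs : nrm (q + s%:C *: (b - q)) <= 1.
    have -> : q + s%:C *: (b - q) = (1 - s)%:C *: q + s%:C *: b.
      by apply/rowP => k; rewrite !mxE rmorphB /=; ring.
    have s1' : 0 <= 1 - s by lra.
    apply: (le_trans (nrmD _ Hn _ _)); rewrite !(nrmZ _ Hn) !cmodR (ger0_norm (ltW s0)) (ger0_norm s1').
    have h1 : (1 - s) * nrm q <= 1 - s by apply: ler_piMr => //; lra.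
    have h2 : s * nrm b <= s by apply: ler_piMr => //; lra.
    lra.
  have := qmin' _ hbs.
  have -> : p - (q + s%:C *: (b - q)) = u - s%:C *: (b - q) by rewrite opprD addrA.
  rewrite l2sq_expand; lra.
pose c := rin q u.
have up : rin p u - c = l2sq u by rewrite -rin_self /u rinD rinN.
have u0 : l2sq u != 0.
  apply/eqP => /l2sq_eq0 /eqP; rewrite subr_eq0 => /eqP pq.
  by move: qB; rewrite -pq np; lra.
have l2u : 0 < l2sq u by rewrite lt_def u0 l2sq_ge0.
have zB : nrm z <= 1 by rewrite nz.
have rzp : rin p u = (1 + t) * rin z u by rewrite /p rinZ.
have c0 : 0 < c.
  rewrite ltNge; apply/negP => cle.
  have := key z zB; rewrite -/c => hz.
  have : rin p u <= c by rewrite rzp; nra.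
  lra.
pose y := (c^-1)%:C *: u.
have rxy x : rin x y = c^-1 * rin x u by rewrite /y rinZr.
have Hre x : rin x y <= nrm x.
  have [nx0|nx0] := eqVneq (nrm x) 0.
    by rewrite (nrm_eq0 _ Hn _ nx0) rin0 (nrm0 _ Hn).
  have nxp : 0 < nrm x by rewrite lt_def nx0 (nrm_ge0 _ Hn).
  pose b := (nrm x)^-1%:C *: x.
  have hb : nrm b <= 1.
    by rewrite /b (nrmZ _ Hn) cmodR ger0_norm ?invr_ge0 ?(nrm_ge0 _ Hn) // mulVf.
  have := key b hb; rewrite /b rinZ -/c rxy => h.
  rewrite ler_pdivrMl //.
  by move: h; rewrite ler_pdivrMl // mulrC.
have Hcm x : cmod (hinner x y) <= nrm x.
  set h := hinner x y.
  have [h0|h0] := eqVneq h 0; first by rewrite h0 cmod0 (nrm_ge0 _ Hn).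
  have ch0 : 0 < cmod h by rewrite lt_def cmod_ge0 andbT; apply/eqP => /cmod_eq0; apply/eqP.
  pose w := h^* * ((cmod h)^-1)%:C.
  have hw : hinner (w *: x) y = (cmod h)%:C.
    rewrite hinnerZ -/h /w mulrAC [h^* * h]mulrC mulcJ -rmorphM /=; congr (_%:C).
    by rewrite expr2 -mulrA mulfV ?mulr1 // gt_eqF.
  have := Hre (w *: x); rewrite -Re_hinner hw /= (nrmZ _ Hn) /w cmodM cmodJ cmodR.
  by rewrite ger0_norm ?invr_ge0 ?cmod_ge0 // mulfV ?gt_eqF // mul1r.
exists y; split => //.
apply: (lt_le_trans _ (Re_le_cmod _)); rewrite Re_hinner rxy.
have hz : c < (1 + t) * rin z u by rewrite -rzp; lra.
have t1 : 0 < 1 + t by lra.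
rewrite -ltr_pdivrMl // in hz.
by rewrite ltr_pdivlMl // mulrC.
Qed.
End Dual.

Section Net.
Context {R : realType} {n : nat}.
Variable (nrm : 'rV[R[i]]_n -> R).
Hypothesis Hn : is_cnorm nrm.
Implicit Types x y z : 'rV[R[i]]_n.

Lemma fy_cont (a : R) y : 0 <= a -> continuous (fun x => cmod (hinner x y) - a * nrm x).
Proof.
move=> a0 x0; apply: (@cont_rV _ _ _ _ (l1 y + a * Mn nrm)).
  by apply: addr_ge0; [exact: l1_ge0 | apply: mulr_ge0 => //; exact: Mn_ge0].
move=> x _.
have h1 : `|cmod (hinner x y) - cmod (hinner x0 y)| <= l1 y * l1 (x - x0).
  by apply: (le_trans (cmod_lip _ _)); rewrite -hinnerB; exact: hinner_lip.
have h2 : `|nrm x - nrm x0| <= Mn nrm * l1 (x - x0) by exact: nrm_cont_bound.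
have h3 : `|a * nrm x - a * nrm x0| <= a * (Mn nrm * l1 (x - x0)).
  by rewrite -mulrBr normrM ger0_norm // ler_wpM2l.
rewrite mulrDl -mulrA.
apply: (le_trans _ (lerD h1 h3)).
have -> : cmod (hinner x y) - a * nrm x - (cmod (hinner x0 y) - a * nrm x0)
  = (cmod (hinner x y) - cmod (hinner x0 y)) - (a * nrm x - a * nrm x0) by ring.
exact: ler_normB.
Qed.

Lemma net (a : R) : 0 < a -> a < 1 ->
  exists s : seq 'rV[R[i]]_n,
    (forall y, y \in s -> forall x, cmod (hinner x y) <= nrm x) /\
    (forall x, exists2 y, y \in s & a * nrm x <= cmod (hinner x y)).
Proof.
move=> a0 a1.
pose S := [set x : 'rV[R[i]]_n | l1 x <= 1] `&` [set x | 1 <= l1 x].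
have Sc : compact S.
  apply: (subclosed_compact _ (ball1_compact 1)); last by move=> x [].
  by apply: closedI; [exact: closed_fle l1_cont | exact: closed_fge l1_cont].
pose D := [set y : 'rV[R[i]]_n | forall x, cmod (hinner x y) <= nrm x].
pose U := fun y : 'rV[R[i]]_n => [set x | 0 < cmod (hinner x y) - a * nrm x].
have Uo y : D y -> open (U y).
  move=> _; apply: (@open_comp _ _ (fun x => cmod (hinner x y) - a * nrm x) [set t | 0 < t]).
    by move=> x _; apply: fy_cont; exact: ltW.
  exact: open_gt.
have SU : S `<=` cover D U.
  move=> x [/= x1 x2].
  have x0 : x != 0 by apply/eqP => x0; move: x2; rewrite x0 /l1 big1 ?ler10 // => k _; rewrite mxE cmod0.
  have nx : 0 < nrm x.
    rewrite lt_def (nrm_ge0 _ Hn) andbT; apply/eqP => /(nrm_eq0 _ Hn) /eqP; exact/negP.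
  pose z := (nrm x)^-1%:C *: x.
  have nz : nrm z = 1.
    by rewrite /z (nrmZ _ Hn) cmodR ger0_norm ?invr_ge0 ?(nrm_ge0 _ Hn) // mulVf // gt_eqF.
  have t0 : 0 < 1 - a by lra.
  have [y [yD yz]] := @dual_approx _ _ nrm Hn z (1 - a) nz t0.
  exists y => //; rewrite /U /= subr_gt0.
  move: yz; rewrite /z hinnerZ cmodM cmodR ger0_norm ?invr_ge0 ?(nrm_ge0 _ Hn) //.
  move=> h; rewrite ltr_pdivlMl // in h; apply: le_lt_trans h.
  have a2 : a <= (1 + (1 - a))^-1.
    rewrite -[leRHS]mul1r ler_pdivlMr; last lra.
    have : 0 <= (1 - a) ^+ 2 by exact: sqr_ge0.
    rewrite expr2; nra.
  by rewrite mulrC ler_wpM2l // ltW.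
have := (eq_ind _ (fun P => P S) Sc _ (compact_cover _)) _ D U Uo SU.
case=> D' D'D SD'.
exists (0 :: finmap.enum_fset D'); split.
  move=> y; rewrite inE => /orP[/eqP -> | yD'] x.
    rewrite /hinner big1 ?cmod0 ?(nrm_ge0 _ Hn) // => k _; rewrite mxE conjc0 mulr0 //.
  have := D'D y yD'; rewrite inE; exact.
move=> x.
have [->|x0] := eqVneq x 0.
  by exists 0; rewrite ?mem_head // (nrm0 _ Hn) mulr0 cmod_ge0.
have lx : 0 < l1 x by rewrite lt_def l1_ge0 andbT; apply: contra x0 => /eqP /l1_eq0 ->.
pose x' := (l1 x)^-1%:C *: x.
have lx' : l1 x' = 1 by rewrite /x' l1Z cmodR ger0_norm ?invr_ge0 ?l1_ge0 // mulVf // gt_eqF.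
have Sx' : S x' by split; rewrite /= lx'.
have [y yD' hy] := SD' x' Sx'.
exists y; first by rewrite inE; apply/orP; right.
move: hy; rewrite /U /= subr_gt0 /x' hinnerZ (nrmZ _ Hn) cmodM cmodR.
rewrite ger0_norm ?invr_ge0 ?l1_ge0 // mulrCA ltr_pM2l ?invr_gt0 //; exact: ltW.
Qed.

End Net.

Section Alg.
Context {R : realType}.

Lemma bern (x : R) m : 0 <= x -> 1 + m%:R * x <= (1 + x) ^+ m.
Proof.
move=> x0; elim: m => [|m IH]; first by rewrite mul0r addr0 expr0.
rewrite exprS -natr1.
have h : 0 <= (1 + x) by lra.
have h2 := ler_wpM2l h IH.
have h3 : 0 <= m%:R * x * x by apply: mulr_ge0 => //; apply: mulr_ge0.
nra.
Qed.

Lemma conv_pow (l mu a b : R) m : 0 <= l -> 0 <= mu -> l + mu = 1 -> 0 <= a -> 0 <= b ->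
  (l * a + mu * b) ^+ m <= l * a ^+ m + mu * b ^+ m.
Proof.
move=> l0 mu0 lm a0 b0; elim: m => [|m IH]; first by rewrite !expr0 !mulr1 lm.
have s0 : 0 <= l * a + mu * b by apply: addr_ge0; apply: mulr_ge0.
rewrite exprS mulrC.
apply: (le_trans (ler_wpM2r s0 IH)).
have am : 0 <= a ^+ m by exact: exprn_ge0.
have bm : 0 <= b ^+ m by exact: exprn_ge0.
have key : 0 <= (a ^+ m - b ^+ m) * (a - b).
  case: (leP a b) => ab.
    by apply: mulr_le0; rewrite subr_le0 //; apply: lerXn2r; rewrite ?nnegrE.
  by apply: mulr_ge0; rewrite subr_ge0 //; [apply: lerXn2r; rewrite ?nnegrE // ltW | exact: ltW].
have lmk : 0 <= l * mu * ((a ^+ m - b ^+ m) * (a - b)) by apply: mulr_ge0 => //; exact: mulr_ge0.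
have -> : l * a ^+ m.+1 + mu * b ^+ m.+1 = (l * a ^+ m + mu * b ^+ m) * (l * a + mu * b)
   + l * mu * ((a ^+ m - b ^+ m) * (a - b)).
  have -> : mu = 1 - l by lra.
  rewrite !exprS; ring.
lra.
Qed.

Lemma pow_sum_conv (al be A B : R) m : 0 < al -> 0 < be -> 0 <= A -> 0 <= B ->
  (A + B) ^+ m <= (al + be) ^+ m * (al / (al + be) * (A / al) ^+ m + be / (al + be) * (B / be) ^+ m).
Proof.
move=> a0 b0 A0 B0.
have ab : 0 < al + be by lra.
have -> : A + B = (al + be) * (al / (al + be) * (A / al) + be / (al + be) * (B / be)).
  by field; rewrite !gt_eqF.
rewrite exprMn; apply: ler_wpM2l; first exact: exprn_ge0 (ltW ab).
apply: conv_pow.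
- by apply: divr_ge0; apply: ltW.
- by apply: divr_ge0; apply: ltW.
- by field; rewrite gt_eqF.
- by apply: divr_ge0 => //; apply: ltW.
- by apply: divr_ge0 => //; apply: ltW.
Qed.

Lemma powR_pK (c : R) (p : nat) : (0 < p)%N -> 0 <= c -> (c ^+ p) `^ (p%:R^-1) = c.
Proof.
move=> p0 c0; rewrite -powR_mulrn // -powRrM mulfV ?powRr1 //.
by rewrite pnatr_eq0 -lt0n.
Qed.

Lemma powR_Kp (c : R) (p : nat) : (0 < p)%N -> 0 <= c -> (c `^ (p%:R^-1)) ^+ p = c.
Proof.
move=> p0 c0; rewrite -powR_mulrn ?powR_ge0 // -powRrM mulVf ?powRr1 //.
by rewrite pnatr_eq0 -lt0n.
Qed.

Lemma powR_le (x y r : R) : 0 <= r -> 0 <= x -> x <= y -> x `^ r <= y `^ r.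
Proof.
move=> r0 x0 xy; apply: (ge0_ler_powR r0) => //; rewrite nnegrE //.
exact: le_trans xy.
Qed.

End Alg.

Section Root.
Context {R : realType} {n : nat}.
Variable (nrm : 'rV[R[i]]_n -> R).
Hypothesis Hn : is_cnorm nrm.
Variables (s : seq 'rV[R[i]]_n) (a : R) (d : nat).
Hypotheses (d0 : (0 < d)%N) (a0 : 0 < a)
  (sD : forall y, y \in s -> forall x, cmod (hinner x y) <= nrm x)
  (sN : forall x, exists2 y, y \in s & a * nrm x <= cmod (hinner x y)).
Local Notation N := (size s).
Local Notation p := (2 * d)%N.
Definition wS : 'I_N -> R := fun _ => N%:R^-1.
Definition yS : 'I_N -> 'rV[R[i]]_n := fun i => nth 0 s i.
Implicit Types x y z u v : 'rV[R[i]]_n.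

Lemma N_gt0 : (0 < N)%N.
Proof. by have [y ys _] := sN 0; rewrite lt0n size_eq0; apply/eqP => e; rewrite e in ys. Qed.

Lemma p_gt0 : (0 < p)%N. Proof. by rewrite muln_gt0. Qed.

Lemma Ninv_gt0 : 0 < N%:R^-1 :> R. Proof. by rewrite invr_gt0 ltr0n N_gt0. Qed.

Lemma F_ge0 z : 0 <= Fsum wS yS d z.
Proof.
apply: sumr_ge0 => i _; apply: mulr_ge0; first exact: ltW Ninv_gt0.
by apply: exprn_ge0; exact: cmod_ge0.
Qed.

Lemma F_le z : Fsum wS yS d z <= nrm z ^+ p.
Proof.
apply: (@le_trans _ _ (\sum_(i < N) N%:R^-1 * nrm z ^+ p)).
  apply: ler_sum => i _; apply: ler_wpM2l; first exact: ltW Ninv_gt0.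
  apply: lerXn2r; rewrite ?nnegrE ?cmod_ge0 ?(nrm_ge0 _ Hn) //.
  by apply: sD; rewrite /yS mem_nth.
rewrite sumr_const card_ord -[_ *+ N]mulr_natl mulrA mulfV ?mul1r //.
by rewrite pnatr_eq0 -lt0n N_gt0.
Qed.

Lemma F_ge z : N%:R^-1 * (a * nrm z) ^+ p <= Fsum wS yS d z.
Proof.
have [y ys hy] := sN z.
have hi : (index y s < N)%N by rewrite index_mem.
pose i0 : 'I_N := Ordinal hi.
have e : yS i0 = y by rewrite /yS nth_index.
rewrite /Fsum (bigD1 i0) //= e; apply: ler_wpDr.
  apply: sumr_ge0 => i _; apply: mulr_ge0; first exact: ltW Ninv_gt0.
  by apply: exprn_ge0; exact: cmod_ge0.
apply: ler_wpM2l; first exact: ltW Ninv_gt0.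
apply: lerXn2r; rewrite ?nnegrE ?cmod_ge0 //.
by apply: mulr_ge0; [exact: ltW | exact: nrm_ge0].
Qed.

Lemma F_hom l z : Fsum wS yS d (l *: z) = cmod l ^+ p * Fsum wS yS d z.
Proof.
rewrite /Fsum mulr_sumr; apply: eq_bigr => i _.
by rewrite hinnerZ cmodM exprMn mulrCA.
Qed.

Lemma nroot_ge0 z : 0 <= nroot wS yS d z.
Proof. exact: powR_ge0. Qed.

Lemma nroot_le z : nroot wS yS d z <= nrm z.
Proof.
rewrite /nroot -(@powR_pK _ (nrm z) p p_gt0 (nrm_ge0 _ Hn _)).
apply: powR_le; [by rewrite invr_ge0 | exact: F_ge0 | exact: F_le].
Qed.

Lemma nroot_ge z : N%:R^-1 `^ p%:R^-1 * (a * nrm z) <= nroot wS yS d z.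
Proof.
have h0 : 0 <= a * nrm z by apply: mulr_ge0; [exact: ltW | exact: nrm_ge0].
rewrite -(@powR_pK _ (a * nrm z) p p_gt0 h0) -powRM; last by exact: exprn_ge0.
  by apply: powR_le; [rewrite invr_ge0 // | apply: mulr_ge0; [exact: ltW Ninv_gt0|exact: exprn_ge0] | exact: F_ge].
exact: ltW Ninv_gt0.
Qed.

Lemma nroot_eq0 z : nroot wS yS d z = 0 -> z = 0.
Proof.
move=> h; apply: (nrm_eq0 _ Hn); have := nroot_ge z; rewrite h => h1.
have c0 : 0 < N%:R^-1 `^ p%:R^-1 :> R by apply: powR_gt0; exact: Ninv_gt0.
have n0 := nrm_ge0 _ Hn z.
apply/eqP; rewrite eq_le n0 andbT.
rewrite pmulr_rle0 // in h1; by rewrite -(pmulr_rle0 _ a0).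
Qed.

Lemma nrootZ l z : nroot wS yS d (l *: z) = cmod l * nroot wS yS d z.
Proof.
rewrite /nroot F_hom powRM ?F_ge0 ?exprn_ge0 ?cmod_ge0 //.
by rewrite powR_pK ?p_gt0 ?cmod_ge0.
Qed.

Lemma nrootK z : nroot wS yS d z ^+ p = Fsum wS yS d z.
Proof. by rewrite /nroot powR_Kp ?p_gt0 ?F_ge0. Qed.

Lemma nrootD u v : nroot wS yS d (u + v) <= nroot wS yS d u + nroot wS yS d v.
Proof.
set al := nroot wS yS d u; set be := nroot wS yS d v.
have [a00|an0] := eqVneq al 0.
  by rewrite (nroot_eq0 u a00) add0r a00 add0r.
have [b00|bn0] := eqVneq be 0.
  by rewrite (nroot_eq0 v b00) addr0 b00 addr0.
have ap : 0 < al by rewrite lt_def an0 nroot_ge0.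
have bp : 0 < be by rewrite lt_def bn0 nroot_ge0.
have ab : 0 < al + be by lra.
suff hF : Fsum wS yS d (u + v) <= (al + be) ^+ p.
  rewrite /nroot -(@powR_pK _ (al + be) p p_gt0 (ltW ab)).
  by apply: powR_le; [rewrite invr_ge0 // | exact: F_ge0 | exact: hF].
have eu : Fsum wS yS d u = al ^+ p by rewrite nrootK.
have ev : Fsum wS yS d v = be ^+ p by rewrite nrootK.
apply: (@le_trans _ _ (\sum_(i < N) wS i * ((al + be) ^+ p *
   (al / (al + be) * (cmod (hinner u (yS i)) / al) ^+ p
    + be / (al + be) * (cmod (hinner v (yS i)) / be) ^+ p)))).
  apply: ler_sum => i _; apply: ler_wpM2l; first exact: ltW Ninv_gt0.
  apply: (le_trans _ (pow_sum_conv _ _ _ _ _ ap bp (cmod_ge0 _) (cmod_ge0 _))).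
  apply: lerXn2r; rewrite ?nnegrE ?cmod_ge0 ?addr_ge0 ?cmod_ge0 //.
  by rewrite hinnerD; exact: cmodD.
have -> : \sum_(i < N) wS i * ((al + be) ^+ p *
   (al / (al + be) * (cmod (hinner u (yS i)) / al) ^+ p
    + be / (al + be) * (cmod (hinner v (yS i)) / be) ^+ p))
  = (al + be) ^+ p * (al / (al + be) / al ^+ p * Fsum wS yS d u
     + be / (al + be) / be ^+ p * Fsum wS yS d v).
  rewrite /Fsum mulrDr !mulr_sumr -big_split /=; apply: eq_bigr => i _.
  rewrite !expr_div_n; ring.
rewrite eu ev mulfVK ?expf_neq0 // mulfVK ?expf_neq0 // -mulrDl divff ?mulr1 //.
by rewrite gt_eqF.
Qed.

Lemma nroot_cnorm : is_cnorm (nroot wS yS d).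
Proof.
split; [exact: nroot_ge0 | exact: nroot_eq0 | exact: nrootZ | exact: nrootD].
Qed.

End Root.

End Helpers.
Import Helpers.

Section Sched.
Variable Nk : nat -> nat.
Hypothesis HN : forall k, (0 < Nk k)%N.

Fixpoint Dp (k : nat) : nat :=
  match k with 0 => Nk 0 | k'.+1 => (Dp k' + Nk k'.+1 * k'.+2)%N end.

Fixpoint kd (d : nat) : nat :=
  match d with 0 => 0%N | d'.+1 => if (Dp (kd d').+1 <= d'.+1)%N then (kd d').+1 else kd d' end.

Lemma Dp_term k : (Nk k * k.+1 <= Dp k)%N.
Proof. case: k => [|k] /=; [lia | lia]. Qed.

Lemma Dp_lt k : (Dp k < Dp k.+1)%N.
Proof. have := HN k.+1; rewrite /=; lia. Qed.

Lemma Dp_mono k k' : (k <= k')%N -> (Dp k <= Dp k')%N.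
Proof.
elim: k' => [|k' IH]; first by rewrite leqn0 => /eqP ->.
rewrite leq_eqVlt => /orP[/eqP -> //| h].
have := IH h; have := Dp_lt k'; lia.
Qed.

Lemma Dp_ge1 k : (0 < Dp k)%N.
Proof. have := @Dp_mono 0 k (leq0n k); have := HN 0; rewrite /=; lia. Qed.

Lemma kd_mono d : (kd d <= kd d.+1)%N.
Proof. by rewrite /=; case: ifP. Qed.

Lemma kd_ok d : kd d = 0%N \/ (Dp (kd d) <= d)%N.
Proof.
elim: d => [|d IH]; first by left.
rewrite /=; case: ifP => h; first by right.
case: IH => [->|h2]; [by left | right; lia].
Qed.

Lemma kd_big d K : (Dp K <= d)%N -> (K <= kd d)%N.
Proof.
elim: d K => [|d IH] K.
  by have := Dp_ge1 K; lia.
move=> hK; case: (leqP (Dp K) d) => h.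
  exact: leq_trans (IH _ h) (kd_mono d).
case: K hK h => [|K] hK h; first by [].
have hK' : (Dp K <= d)%N by have := Dp_lt K; lia.
have := IH _ hK'; rewrite leq_eqVlt => /orP[/eqP e|lt].
  by rewrite /= -e; have -> : (Dp K.+1 <= d.+1)%N by [].
exact: leq_trans lt (kd_mono d).
Qed.

End Sched.


Lemma power_bound {R : realType} (N k d : nat) : (0 < d)%N -> (N * k.+1 <= d)%N ->
  N%:R * ((k.+1)%:R / (k.+2)%:R) ^+ (2 * d) <= 1 :> R.
Proof.
move=> d0 hN.
set a : R := (k.+1)%:R / (k.+2)%:R.
set x : R := (k.+1)%:R^-1.
have x0 : 0 <= x by rewrite invr_ge0.
have e : (1 + x) * a = 1.
  rewrite /a /x -[(k.+2)%:R]natr1.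
  have c0 : 0 < (k.+1)%:R :> R by rewrite ltr0n.
  by field; rewrite gt_eqF ?gt_eqF //; lra.
have hb := @bern R x (2 * d)%N x0.
have h2 : N%:R <= (2 * d)%N%:R * x.
  rewrite /x ler_pdivlMr ?ltr0n // -natrM ler_nat; lia.
have h3 : N%:R <= (1 + x) ^+ (2 * d) by lra.
have a0 : 0 <= a by rewrite /a divr_ge0.
apply: (le_trans (ler_wpM2r (exprn_ge0 _ a0) h3)).
by rewrite -exprMn e expr1n.
Qed.

Lemma compact_nrm_bound {R : realType} {n : nat} {nrm : 'rV[R[i]]_n -> R} :
  is_cnorm nrm -> forall K : set 'rV[R[i]]_n, compact K ->
  exists M : R, 0 <= M /\ forall z, K z -> nrm z <= M.
Proof.
move=> Hn K Kc.
have := compact_bounded (continuous_compact (continuous_subspaceT (nrm_cont _ Hn)) Kc).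
case=> M [Mreal HM].
exists (`|M| + 1); split; first by rewrite addr_ge0.
move=> z Kz.
have : `|nrm z| <= `|M| + 1.
  apply: (HM (`|M| + 1)); last by exists z.
  by apply: (le_lt_trans (ler_norm M)); rewrite ltrDl.
exact: le_trans (ler_norm _).
Qed.

Theorem theorem4p5 (R : realType) (n : nat) (nrm : 'rV[R[i]]_n -> R) :
  is_cnorm nrm ->
  exists (N : nat -> nat)
         (w : forall d : nat, 'I_(N d) -> R)
         (y : forall d : nat, 'I_(N d) -> 'rV[R[i]]_n),
    (forall d, (0 < d)%N -> forall i, 0 < w d i) /\
    (forall d, (0 < d)%N -> is_cnorm (nroot (w d) (y d) d)) /\
    (forall d, (0 < d)%N -> forall z, nroot (w d) (y d) d z <= nrm z) /\
    (forall K : set 'rV[R[i]]_n, compact K ->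
       forall eps : R, 0 < eps ->
       exists D : nat, forall d, (D <= d)%N -> (0 < d)%N ->
         forall z, K z -> `|nroot (w d) (y d) d z - nrm z| < eps).
Proof.
move=> Hn.
pose ak (k : nat) : R := (k.+1)%:R / (k.+2)%:R.
have ak0 k : 0 < ak k by rewrite /ak divr_gt0 ?ltr0n.
have ak1 k : ak k < 1 by rewrite /ak ltr_pdivrMr ?ltr0n // mul1r ltr_nat.
have netk : forall k : nat, exists s : seq 'rV[R[i]]_n,
    (forall y, y \in s -> forall x, cmod (hinner x y) <= nrm x) /\
    (forall x, exists2 y, y \in s & ak k * nrm x <= cmod (hinner x y)).
  by move=> k; exact: (@net _ _ nrm Hn (ak k) (ak0 k) (ak1 k)).
case: (choice netk) => sf Hsf.
pose Nk k := size (sf k).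
have HN k : (0 < Nk k)%N by have [_ sN] := Hsf k; exact: N_gt0 _ _ _ sN.
pose kdd := kd Nk.
exists (fun d => Nk (kdd d)), (fun d => wS (sf (kdd d))), (fun d => yS (sf (kdd d))).
split.
  move=> d d0 i; have [_ sN] := Hsf (kdd d); exact: Ninv_gt0 _ _ _ sN.
split.
  move=> d d0; have [_ sN] := Hsf (kdd d); exact: nroot_cnorm _ Hn _ _ _ d0 (ak0 _) sN.
split.
  move=> d d0 z; have [sD sN] := Hsf (kdd d); exact: nroot_le _ Hn _ _ _ d0 sD sN z.
move=> K Kc eps eps0.
have [M [M0 HM]] := compact_nrm_bound Hn _ Kc.
pose K0 := Num.trunc (2 * M / eps).
exists (Dp Nk K0) => d hd d0 z Kz.
set k := kdd d.
have kK : (K0 <= k)%N by exact: kd_big.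
have hD : (Dp Nk k <= d)%N.
  case: (kd_ok Nk d) => [k0|]; last by [].
  rewrite -/kdd -/k in k0 *; rewrite k0; apply: leq_trans hd; exact: (Dp_mono _ HN _ _ (leq0n K0)).
have hNk : (Nk k * k.+1 <= d)%N by exact: leq_trans (Dp_term Nk k) hD.
have [sD sN] := Hsf k.
have hge := nroot_ge _ Hn _ _ _ d0 (ak0 k) sN z.
have hle := nroot_le _ Hn _ (ak k) _ d0 sD sN z.
set a := ak k in hge.
have hpow : a <= (Nk k)%:R^-1 `^ (2 * d)%:R^-1.
  have p0 : (0 < 2 * d)%N by rewrite muln_gt0.
  rewrite -(@powR_pK _ a (2 * d)%N p0 (ltW (ak0 k))).
  apply: powR_le; first by rewrite invr_ge0.
    exact: exprn_ge0 (ltW (ak0 k)).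
  rewrite -[_^-1]mulr1 ler_pdivlMl ?ltr0n ?HN //.
  exact: power_bound.
have nz0 := nrm_ge0 _ Hn z.
have a0 := ak0 k.
have hlow : a * (a * nrm z) <= nroot (wS (sf k)) (yS (sf k)) d z.
  apply: le_trans hge; apply: ler_wpM2r => //; exact: mulr_ge0 (ltW a0) nz0.
rewrite ler0_norm; last by rewrite subr_le0.
have hM := HM z Kz.
have h1a : 1 - a = (k.+2)%:R^-1.
  rewrite /a /ak -[(k.+2)%:R]natr1.
  have c0 : 0 < (k.+1)%:R :> R by rewrite ltr0n.
  by field; rewrite gt_eqF //; lra.
have hk2 : (k.+2)%:R^-1 <= (K0.+2)%:R^-1 :> R.
  by rewrite lef_pV2 ?posrE ?ltr0n // ler_nat.
have hK0 : 2 * M / eps < (K0.+2)%:R.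
  apply: (lt_le_trans (truncnS_gt _)); rewrite ler_nat /K0; exact: leqnSn.
have hK0' : 2 * M * (K0.+2)%:R^-1 < eps.
  have c0 : 0 < (K0.+2)%:R :> R by rewrite ltr0n.
  rewrite ltr_pdivrMr // in hK0; rewrite ltr_pdivrMr //; lra.
have ha1 : a < 1 by exact: ak1.
have e1 : 0 <= 1 - a by lra.
have hfin : (1 - a) * M * 2 <= 2 * M * (K0.+2)%:R^-1.
  rewrite h1a => {hK0}; move: (ler_wpM2r M0 hk2) => h.
  have -> : (k.+2)%:R^-1 * M * 2 = 2 * ((k.+2)%:R^-1 * M) by ring.
  have -> : 2 * M / (K0.+2)%:R = 2 * ((K0.+2)%:R^-1 * M) by ring.
  by apply: ler_wpM2l.
have f0 : 0 <= (1 - a) * nrm z by exact: mulr_ge0.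
have f1 : (1 - a) * nrm z * (1 + a) <= (1 - a) * nrm z * 2 by apply: ler_wpM2l => //; lra.
have f2 : (1 - a) * nrm z <= (1 - a) * M by exact: ler_wpM2l.
have e2 : nrm z - a * (a * nrm z) = (1 - a) * nrm z * (1 + a) by ring.
rewrite opprB; apply: (le_lt_trans _ hK0'); apply: (le_trans _ hfin).
apply: (@le_trans _ _ (nrm z - a * (a * nrm z))); first by rewrite lerD2l lerN2.
rewrite e2; apply: (le_trans f1); exact: ler_wpM2r _ f2.
Qed.
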